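(* If there is a $P$-counting module of data order $K$, then there is a $(\lambda n.\,2^{P(n)})$-counting module of data order $K+1$.
   Context: Types are built from a finite set $\mathcal{S}$ of sorts (containing $\mathsf{bool}$ and $\mathsf{list}$) by $\sigma ::= \iota \mid \sigma \times \tau \mid \sigma \Rightarrow \tau$. Type order: $\mathrm{ord}(\iota)=0$ for sorts, $\mathrm{ord}(\sigma\times\tau)=\max(\mathrm{ord}(\sigma),\mathrm{ord}(\tau))$, $\mathrm{ord}(\sigma\Rightarrow\tau)=\max(\mathrm{ord}(\sigma)+1,\mathrm{ord}(\tau))$. Constructors include $\mathsf{true},\mathsf{false}:\mathsf{bool}$, $[]:\mathsf{list}$ and infix $::\ :\mathsf{bool}\Rightarrow\mathsf{list}\Rightarrow\mathsf{list}$; constructors take arguments of order-$0$ types and return a sort. Syntax. Patterns: $\ell ::= x \mid c\,\ell_1\cdots\ell_m$ ($c$ a constructor). Expressions: $s ::= x \mid c \mid f \mid \mathsf{if}\ s_1\ \mathsf{then}\ s_2\ \mathsf{else}\ s_3 \mid \mathsf{choose}\ s_1\cdots s_n \mid (s,t) \mid s\,t$ ($f$ a defined symbol). Clauses have the form $f\,\ell_1\cdots\ell_k = s$; each lhs variable occurs once, rhs variables occur in the lhs, both sides are simply typed with a common type under some type environment $\Gamma$ for the lhs variables, constructors are fully applied, and all clauses for $f$ have the same number $\mathrm{arity}(f)$ of arguments. Sub-expressions: $s \unrhd t$ iff $s = t$ or $s \rhd t$, where $(s_1,s_2)\rhd t$, $\mathsf{if}\ s_1\ \mathsf{then}\ s_2\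 \mathsf{else}\ s_3 \rhd t$ and $\mathsf{choose}\ s_1\cdots s_n\rhd t$ hold if $s_i \unrhd t$ for some $i$, and $s_1\,s_2 \rhd t$ holds if $s_1 \rhd t$ or $s_2 \unrhd t$. A clause $f\,\ell_1\cdots\ell_k=s$ is cons-free if every $t$ with $s\unrhd t$ of the form $c\,s_1\cdots s_m$ with $c$ a constructor is a data expression or satisfies $\ell_i\unrhd t$ for some $i$. A list of clauses has data order $K$ if all clauses can be typed with environments assigning every variable a type of order $\le K$. Semantics. Data expressions $d ::= c\,d_1\cdots d_m \mid (d,d')$; values $v ::= d \mid (v,w) \mid f\,v_1\cdots v_n$ with $n<\mathrm{arity}(f)$. For a list of clauses $p$, judgements $p,\gamma\vdash s\to w$ and $p\vdash^{\mathrm{call}} f\,v_1\cdots v_n\to w$ are derived by: $p,\gamma\vdash x\to\gamma(x)$; $p,\gamma\vdash f\to w$ if $p\vdash^{\mathrm{call}} f\to w$; $p,\gamma\vdash c\,s_1\cdots s_m\to c\,b_1\cdots b_m$ if $p,\gamma\vdash s_i\to b_i$; $p,\gamma\vdash(s,t)\to(v,w)$ if $s\to v$, $t\to w$; $p,\gamma\vdash\mathsf{choose}\ s_1\cdots s_n\to w$ if $p,\gamma\vdash s_i\to w$ for some $i$; $p,\gamma\vdash\mathsf{if}\ s_1\ \mathsf{then}\ s_2\ \mathsf{else}\ s_3\to w$ if $s_1\to\mathsf{true}$ and $s_2\to w$, or $s_1\to\mathsf{false}$ and $s_3\to w$; $p,\gamma\vdash s\,t\to w$ if $s\to f\,v_1\cdots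 v_n$, $t\to v_{n+1}$ and $p\vdash^{\mathrm{call}} f\,v_1\cdots v_{n+1}\to w$; $p\vdash^{\mathrm{call}} f\,v_1\cdots v_n\to f\,v_1\cdots v_n$ if $n<\mathrm{arity}(f)$; $p\vdash^{\mathrm{call}} f\,v_1\cdots v_k\to w$ if $p,\gamma\vdash s\to w$ where $f\,\ell_1\cdots\ell_k=s$ is the first clause of $p$ with $v_i=\ell_i\gamma$ for all $i$ for some $\gamma$ on the lhs variables. Counting modules. For $P:\mathbb{N}\to\mathbb{N}\setminus\{0\}$, a $P$-counting module is a tuple $(\alpha_\pi,\mathcal{D}_\pi,\mathcal{A}_\pi,[\![\cdot]\!]_\pi,p_\pi)$ where: $\alpha_\pi$ is a type; $\mathcal{D}_\pi$ is a set of fresh defined symbols containing $\mathsf{seed}_\pi:\mathsf{list}\Rightarrow\alpha_\pi$, $\mathsf{pred}_\pi:\mathsf{list}\Rightarrow\alpha_\pi\Rightarrow\alpha_\pi$, $\mathsf{zero}_\pi:\mathsf{list}\Rightarrow\alpha_\pi\Rightarrow\mathsf{bool}$; for each $n\in\mathbb{N}$, $\mathcal{A}^n_\pi$ is a set of values of type $\alpha_\pi$ built over the constructors and $\mathcal{D}_\pi$ and $[\![\cdot]\!]^n_\pi:\mathcal{A}^n_\pi\to\mathbb{N}$ is total; and $p_\pi$ is a list of cons-free clauses on the symbols of $\mathcal{D}_\pi$ such that for every boolean list $cs$ of length $n$: there is a unique value $v$ with $p_\pi\vdash^{\mathrm{call}}\mathsf{seed}_\pi\,cs\to v$, and it satisfies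 $v\in\mathcal{A}^n_\pi$, $[\![v]\!]^n_\pi=P(n)-1$; if $v\in\mathcal{A}^n_\pi$ with $[\![v]\!]^n_\pi=i>0$, there is a unique $w$ with $p_\pi\vdash^{\mathrm{call}}\mathsf{pred}_\pi\,cs\,v\to w$, and $w\in\mathcal{A}^n_\pi$, $[\![w]\!]^n_\pi=i-1$; and for $v\in\mathcal{A}^n_\pi$ with $[\![v]\!]^n_\pi=i$, $p_\pi\vdash^{\mathrm{call}}\mathsf{zero}_\pi\,cs\,v\to\mathsf{true}$ iff $i=0$, and $p_\pi\vdash^{\mathrm{call}}\mathsf{zero}_\pi\,cs\,v\to\mathsf{false}$ iff $i>0$. The module has data order $K$ if $p_\pi$ has data order $K$. *)

(* Defs.v *)
From Stdlib Require Import List Arith Lia.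
Import ListNotations.
Set Implicit Arguments.

Inductive ty (S : Type) : Type :=
| TSort : S -> ty S
| TProd : ty S -> ty S -> ty S
| TArr  : ty S -> ty S -> ty S.
Arguments TSort {S}. Arguments TProd {S}. Arguments TArr {S}.

Fixpoint ord {T} (t : ty T) : nat :=
  match t with
  | TSort _ => 0
  | TProd a b => Nat.max (ord a) (ord b)
  | TArr a b => Nat.max (Datatypes.S (ord a)) (ord b)
  end.

Record signature := Signature {
  sort : Type;
  sort_finite : exists l : list sort, forall s, In s l;
  sbool : sort;
  slist : sort;
  sbool_slist : sbool <> slist;
  con : Type;
  con_args : con -> list (ty sort);
  con_res  : con -> sort;
  con_args_ord0 : forall c t, In t (con_args c) -> ord t = 0;
  ctrue : con; cfalse : con; cnil : con; ccons : con;
  ctrue_ty  : con_args ctrue = [] /\ con_res ctrue = sbool;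
  cfalse_ty : con_args cfalse = [] /\ con_res cfalse = sbool;
  cnil_ty   : con_args cnil = [] /\ con_res cnil = slist;
  ccons_ty  : con_args ccons = [TSort sbool; TSort slist] /\ con_res ccons = slist;
  ctrue_cfalse : ctrue <> cfalse;
  cnil_ccons : cnil <> ccons
}.
Arguments con_args {s} c.
Arguments con_res {s} c.

Section Lang.
Variable Sg : signature.

Notation ty' := (ty (sort Sg)).
Definition tbool : ty' := TSort (sbool Sg).
Definition tlist : ty' := TSort (slist Sg).

(* Defined symbols: an unbounded supply of names for every type;
   a symbol carries its (simple) type. *)
Record fsym := FSym { fname : nat; fty : ty' }.

Inductive pat : Type :=
| PVar : nat -> pat
| PCons : con Sg -> list pat -> pat.

(* Constructor applications are represented fully applied (ECons). *)
Inductive expr : Type :=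
| EVar : nat -> expr
| ECons : con Sg -> list expr -> expr
| EFun : fsym -> expr
| EIf : expr -> expr -> expr -> expr
| EChoose : list expr -> expr
| EPair : expr -> expr -> expr
| EApp : expr -> expr -> expr.

Fixpoint pat2expr (l : pat) : expr :=
  match l with
  | PVar x => EVar x
  | PCons c ls => ECons c (map pat2expr ls)
  end.

Fixpoint pat_vars (l : pat) : list nat :=
  match l with
  | PVar x => [x]
  | PCons c ls => flat_map pat_vars ls
  end.

Inductive var_in : nat -> expr -> Prop :=
| VI_var x : var_in x (EVar x)
| VI_cons x c es e : In e es -> var_in x e -> var_in x (ECons c es)
| VI_if1 x a b c : var_in x a -> var_in x (EIf a b c)
| VI_if2 x a b c : var_in x b -> var_in x (EIf a b c)
| VI_if3 x a b c : var_in x c -> var_in x (EIf a b c)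
| VI_choose x es e : In e es -> var_in x e -> var_in x (EChoose es)
| VI_pair1 x a b : var_in x a -> var_in x (EPair a b)
| VI_pair2 x a b : var_in x b -> var_in x (EPair a b)
| VI_app1 x a b : var_in x a -> var_in x (EApp a b)
| VI_app2 x a b : var_in x b -> var_in x (EApp a b).

Inductive sym_in : fsym -> expr -> Prop :=
| SI_fun f : sym_in f (EFun f)
| SI_cons f c es e : In e es -> sym_in f e -> sym_in f (ECons c es)
| SI_if1 f a b c : sym_in f a -> sym_in f (EIf a b c)
| SI_if2 f a b c : sym_in f b -> sym_in f (EIf a b c)
| SI_if3 f a b c : sym_in f c -> sym_in f (EIf a b c)
| SI_choose f es e : In e es -> sym_in f e -> sym_in f (EChoose es)
| SI_pair1 f a b : sym_in f a -> sym_in f (EPair a b)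
| SI_pair2 f a b : sym_in f b -> sym_in f (EPair a b)
| SI_app1 f a b : sym_in f a -> sym_in f (EApp a b)
| SI_app2 f a b : sym_in f b -> sym_in f (EApp a b).

(* Strict sub-expression relation  s |> t  (constructor applications
   c s1 .. sm are curried applications, so c s1..sm |> t iff some si |>= t). *)
Inductive subs : expr -> expr -> Prop :=
| SB_pair1 a b t : a = t \/ subs a t -> subs (EPair a b) t
| SB_pair2 a b t : b = t \/ subs b t -> subs (EPair a b) t
| SB_if1 a b c t : a = t \/ subs a t -> subs (EIf a b c) t
| SB_if2 a b c t : b = t \/ subs b t -> subs (EIf a b c) t
| SB_if3 a b c t : c = t \/ subs c t -> subs (EIf a b c) t
| SB_choose es e t : In e es -> e = t \/ subs e t -> subs (EChoose es) t
| SB_app1 a b t : subs a t -> subs (EApp a b) t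
| SB_app2 a b t : b = t \/ subs b t -> subs (EApp a b) t
| SB_cons c es e t : In e es -> e = t \/ subs e t -> subs (ECons c es) t.

Definition sube (s t : expr) : Prop := s = t \/ subs s t.

Inductive is_data_expr : expr -> Prop :=
| DE_cons c es : Forall is_data_expr es -> is_data_expr (ECons c es)
| DE_pair a b : is_data_expr a -> is_data_expr b -> is_data_expr (EPair a b).

Definition tenv := nat -> ty'.

Inductive has_type (G : tenv) : expr -> ty' -> Prop :=
| T_var x : has_type G (EVar x) (G x)
| T_fun f : has_type G (EFun f) (fty f)
| T_cons (c : con Sg) es : Forall2 (has_type G) es (con_args c) ->
    has_type G (ECons c es) (TSort (con_res c))
| T_if a b c t : has_type G a tbool -> has_type G b t -> has_type G c t ->
    has_type G (EIf a b c) t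
| T_choose es t : Forall (fun e => has_type G e t) es -> has_type G (EChoose es) t
| T_pair a b s t : has_type G a s -> has_type G b t -> has_type G (EPair a b) (TProd s t)
| T_app a b s t : has_type G a (TArr s t) -> has_type G b s -> has_type G (EApp a b) t.

Record clause := Clause { chead : fsym; cpats : list pat; crhs : expr }.

Definition lhs_expr (cl : clause) : expr :=
  fold_left EApp (map pat2expr (cpats cl)) (EFun (chead cl)).

Definition lhs_vars (cl : clause) : list nat := flat_map pat_vars (cpats cl).

Definition clause_typed (G : tenv) (cl : clause) : Prop :=
  NoDup (lhs_vars cl) /\
  (forall x, var_in x (crhs cl) -> In x (lhs_vars cl)) /\
  exists t, has_type G (lhs_expr cl) t /\ has_type G (crhs cl) t.

Definition clause_wf (cl : clause) : Prop := exists G, clause_typed G cl.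

Definition cons_free_clause (cl : clause) : Prop :=
  forall t c es, sube (crhs cl) t -> t = ECons c es ->
    is_data_expr t \/ exists l, In l (cpats cl) /\ sube (pat2expr l) t.

Definition program := list clause.

Definition program_wf (p : program) : Prop :=
  (forall cl, In cl p -> clause_wf cl) /\
  (forall cl1 cl2, In cl1 p -> In cl2 p -> chead cl1 = chead cl2 ->
     length (cpats cl1) = length (cpats cl2)).

Definition cons_free (p : program) : Prop :=
  program_wf p /\ forall cl, In cl p -> cons_free_clause cl.

Definition data_order (p : program) (K : nat) : Prop :=
  forall cl, In cl p -> exists G, clause_typed G cl /\
    forall x, In x (lhs_vars cl) -> ord (G x) <= K.

(* "n < arity(f)": some (equivalently, by well-formedness, every)
   clause for f in p has more than n arguments. *)
Definition below_arity (p : program) (f : fsym) (n : nat) : Prop :=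
  exists cl, In cl p /\ chead cl = f /\ n < length (cpats cl).

Inductive val : Type :=
| VCons : con Sg -> list val -> val
| VPair : val -> val -> val
| VFun : fsym -> list val -> val.

Inductive is_data : val -> Prop :=
| D_cons c vs : Forall is_data vs -> is_data (VCons c vs)
| D_pair a b : is_data a -> is_data b -> is_data (VPair a b).

Inductive is_value (p : program) : val -> Prop :=
| V_data d : is_data d -> is_value p d
| V_pair a b : is_value p a -> is_value p b -> is_value p (VPair a b)
| V_fun f vs : Forall (is_value p) vs -> below_arity p f (length vs) ->
    is_value p (VFun f vs).

Fixpoint arrows (ts : list ty') (t : ty') : ty' :=
  match ts with [] => t | s :: ts => TArr s (arrows ts t) end.

Inductive val_type : val -> ty' -> Prop :=
| VT_cons (c : con Sg) vs : Forall2 val_type vs (con_args c) -> val_type (VCons c vs) (TSort (con_res c))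
| VT_pair a b s t : val_type a s -> val_type b t -> val_type (VPair a b) (TProd s t)
| VT_fun f vs ts t : fty f = arrows ts t -> Forall2 val_type vs ts ->
    val_type (VFun f vs) t.

Inductive vsym_in : fsym -> val -> Prop :=
| VS_cons f c vs v : In v vs -> vsym_in f v -> vsym_in f (VCons c vs)
| VS_pair1 f a b : vsym_in f a -> vsym_in f (VPair a b)
| VS_pair2 f a b : vsym_in f b -> vsym_in f (VPair a b)
| VS_fun f vs : vsym_in f (VFun f vs)
| VS_funarg f g vs v : In v vs -> vsym_in f v -> vsym_in f (VFun g vs).

Definition venv := nat -> val.

Fixpoint pat_subst (g : venv) (l : pat) : val :=
  match l with
  | PVar x => g x
  | PCons c ls => VCons c (map (pat_subst g) ls)
  end.

Definition clause_matches (cl : clause) (f : fsym) (vs : list val) (g : venv) : Prop :=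
  chead cl = f /\ vs = map (pat_subst g) (cpats cl).

Inductive eval (p : program) : venv -> expr -> val -> Prop :=
| E_var (g : venv) x : eval p g (EVar x) (g x)
| E_fun (g : venv) f w : call p f [] w -> eval p g (EFun f) w
| E_cons (g : venv) c es bs : Forall2 (eval p g) es bs -> eval p g (ECons c es) (VCons c bs)
| E_pair (g : venv) a b v w : eval p g a v -> eval p g b w -> eval p g (EPair a b) (VPair v w)
| E_choose (g : venv) es e w : In e es -> eval p g e w -> eval p g (EChoose es) w
| E_if_t (g : venv) a b c w : eval p g a (VCons (ctrue Sg) []) -> eval p g b w -> eval p g (EIf a b c) w
| E_if_f (g : venv) a b c w : eval p g a (VCons (cfalse Sg) []) -> eval p g c w -> eval p g (EIf a b c) w
| E_app (g : venv) a b f vs v w : eval p g a (VFun f vs) -> eval p g b v ->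
    call p f (vs ++ [v]) w -> eval p g (EApp a b) w
with call (p : program) : fsym -> list val -> val -> Prop :=
| C_partial f vs : below_arity p f (length vs) -> call p f vs (VFun f vs)
| C_clause f vs i cl g w :
    nth_error p i = Some cl ->
    clause_matches cl f vs g ->
    (forall j cl', j < i -> nth_error p j = Some cl' ->
        ~ exists g', clause_matches cl' f vs g') ->
    eval p g (crhs cl) w ->
    call p f vs w.

Definition enc_bool (b : bool) : val :=
  VCons (if b then ctrue Sg else cfalse Sg) [].

Fixpoint enc_list (cs : list bool) : val :=
  match cs with
  | [] => VCons (cnil Sg) []
  | b :: cs => VCons (ccons Sg) [enc_bool b; enc_list cs]
  end.

Record cmodule := CModule {
  m_alpha : ty';
  m_D : list fsym;
  m_seed : fsym; m_pred : fsym; m_zero : fsym;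
  m_A : nat -> val -> Prop;
  m_interp : nat -> val -> nat;
  m_prog : program
}.

Definition is_counting_module (P : nat -> nat) (m : cmodule) : Prop :=
  let p := m_prog m in
  In (m_seed m) (m_D m) /\ In (m_pred m) (m_D m) /\ In (m_zero m) (m_D m) /\
  fty (m_seed m) = TArr tlist (m_alpha m) /\
  fty (m_pred m) = TArr tlist (TArr (m_alpha m) (m_alpha m)) /\
  fty (m_zero m) = TArr tlist (TArr (m_alpha m) tbool) /\
  cons_free p /\
  (forall cl, In cl p -> In (chead cl) (m_D m) /\
     forall f, sym_in f (crhs cl) -> In f (m_D m)) /\
  (forall n v, m_A m n v ->
     is_value p v /\ val_type v (m_alpha m) /\
     forall f, vsym_in f v -> In f (m_D m)) /\
  (forall n cs, length cs = n ->
     (exists v, call p (m_seed m) [enc_list cs] v /\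
        (forall v', call p (m_seed m) [enc_list cs] v' -> v' = v) /\
        m_A m n v /\ m_interp m n v = P n - 1) /\
     (forall v, m_A m n v -> 0 < m_interp m n v ->
        exists w, call p (m_pred m) [enc_list cs; v] w /\
          (forall w', call p (m_pred m) [enc_list cs; v] w' -> w' = w) /\
          m_A m n w /\ m_interp m n w = m_interp m n v - 1) /\
     (forall v, m_A m n v ->
        (call p (m_zero m) [enc_list cs; v] (enc_bool true) <-> m_interp m n v = 0) /\
        (call p (m_zero m) [enc_list cs; v] (enc_bool false) <-> 0 < m_interp m n v))).

Definition module_data_order (m : cmodule) (K : nat) : Prop :=
  data_order (m_prog m) K.

End Lang.

(* Main.v *)
Require Import Defs.
From Stdlib Require Import List Arith Lia Bool.
Import ListNotations.
Set Implicit Arguments.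


Section Gen.
Variable Sg : signature.
Notation program := (program Sg).
Notation val := (val Sg).
Notation expr := (expr Sg).
Notation fsym := (fsym Sg).
Notation venv := (venv Sg).

Section Ind.
Variable p : program.
Variable Pe : venv -> expr -> val -> Prop.
Variable Pc : fsym -> list val -> val -> Prop.
Hypothesis h_var : forall g x, Pe g (EVar Sg x) (g x).
Hypothesis h_fun : forall g f w, call p f [] w -> Pc f [] w -> Pe g (EFun f) w.
Hypothesis h_cons : forall g c es bs,
  Forall2 (fun e b => eval p g e b /\ Pe g e b) es bs -> Pe g (ECons c es) (VCons c bs).
Hypothesis h_pair : forall g a b v w, eval p g a v -> Pe g a v -> eval p g b w -> Pe g b w ->
  Pe g (EPair a b) (VPair v w).
Hypothesis h_choose : forall g es e w, In e es -> eval p g e w -> Pe g e w -> Pe g (EChoose es) w.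
Hypothesis h_if_t : forall g a b c w, eval p g a (VCons (ctrue Sg) []) -> Pe g a (VCons (ctrue Sg) []) ->
  eval p g b w -> Pe g b w -> Pe g (EIf a b c) w.
Hypothesis h_if_f : forall g a b c w, eval p g a (VCons (cfalse Sg) []) -> Pe g a (VCons (cfalse Sg) []) ->
  eval p g c w -> Pe g c w -> Pe g (EIf a b c) w.
Hypothesis h_app : forall g a b f vs v w, eval p g a (VFun f vs) -> Pe g a (VFun f vs) ->
  eval p g b v -> Pe g b v -> call p f (vs ++ [v]) w -> Pc f (vs ++ [v]) w -> Pe g (EApp a b) w.
Hypothesis h_partial : forall f vs, below_arity p f (length vs) -> Pc f vs (VFun f vs).
Hypothesis h_clause : forall f vs i cl g w,
    nth_error p i = Some cl ->
    clause_matches cl f vs g ->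
    (forall j cl', j < i -> nth_error p j = Some cl' ->
        ~ exists g', clause_matches cl' f vs g') ->
    eval p g (crhs cl) w -> Pe g (crhs cl) w ->
    Pc f vs w.

Fixpoint eval_ind2 g e w (H : eval p g e w) {struct H} : Pe g e w :=
  match H in eval _ g e w return Pe g e w with
  | E_var _ g x => h_var g x
  | E_fun g H1 => h_fun g H1 (call_ind2 H1)
  | E_cons c HF => h_cons c
      ((fix F es bs (HF : Forall2 (eval p _) es bs) : Forall2 (fun e b => eval p _ e b /\ Pe _ e b) es bs :=
         match HF with
         | Forall2_nil _ => Forall2_nil _
         | Forall2_cons _ _ H1 H2 => Forall2_cons _ _ (conj H1 (eval_ind2 H1)) (F _ _ H2)
         end) _ _ HF)
  | E_pair H1 H2 => h_pair H1 (eval_ind2 H1) H2 (eval_ind2 H2)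
  | E_choose es Hin H1 => h_choose es Hin H1 (eval_ind2 H1)
  | E_if_t c H1 H2 => h_if_t c H1 (eval_ind2 H1) H2 (eval_ind2 H2)
  | E_if_f b H1 H2 => h_if_f b H1 (eval_ind2 H1) H2 (eval_ind2 H2)
  | E_app H1 H2 H3 => h_app H1 (eval_ind2 H1) H2 (eval_ind2 H2) H3 (call_ind2 H3)
  end
with call_ind2 f vs w (H : call p f vs w) {struct H} : Pc f vs w :=
  match H in call _ f vs w return Pc f vs w with
  | C_partial vs Hb => h_partial vs Hb
  | C_clause H1 H2 H3 H4 => h_clause H1 H2 H3 H4 (eval_ind2 H4)
  end.

Lemma mut_ind : (forall g e w, eval p g e w -> Pe g e w) /\ (forall f vs w, call p f vs w -> Pc f vs w).
Proof. split; [exact eval_ind2 | exact call_ind2]. Qed.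
End Ind.

Lemma mono_all (p q : program) :
  (forall g e w, eval p g e w -> eval (p ++ q) g e w) /\
  (forall f vs w, call p f vs w -> call (p ++ q) f vs w).
Proof.
  split; [intros g e w H; apply (@eval_ind2 p (fun g e w => eval (p ++ q) g e w) (fun f vs w => call (p ++ q) f vs w))
         |intros f vs w H; apply (@call_ind2 p (fun g e w => eval (p ++ q) g e w) (fun f vs w => call (p ++ q) f vs w))];
      intros; auto.
  all: match goal with
  | |- eval _ _ (EVar _ _) _ => constructor
  | |- eval _ _ (EFun _) _ => constructor; auto
  | |- eval _ _ (ECons _ _) _ => constructor; match goal with H : Forall2 _ _ _ |- _ => induction H; constructor; tauto end
  | |- eval _ _ (EPair _ _) _ => constructor; auto
  | |- eval _ _ (EChoose _) _ => econstructor; eauto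
  | H : eval _ _ _ (VCons (ctrue _) _) |- eval _ _ (EIf _ _ _) _ => eapply E_if_t; eauto
  | H : eval _ _ _ (VCons (cfalse _) _) |- eval _ _ (EIf _ _ _) _ => eapply E_if_f; eauto
  | |- eval _ _ (EApp _ _) _ => econstructor; eauto
  | |- call _ _ _ (VFun _ _) => constructor; match goal with H : below_arity _ _ _ |- _ =>
        destruct H as [cl [H1 [H2 H3]]]; exists cl; rewrite in_app_iff; auto end
  | |- call _ _ _ _ => idtac
  end.
  all: match goal with Hn : nth_error _ ?i = Some _ |- _ =>
     assert (i < length p) by (apply nth_error_Some; congruence);
     eapply C_clause with (i := i); eauto;
      [rewrite nth_error_app1; auto
      |intros j cl' Hj Hn'; rewrite nth_error_app1 in Hn'; eauto; lia] end.
Qed.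


Section Back.
Variables (p q : program) (D : list fsym).
Definition old (v : val) := forall f, vsym_in f v -> In f D.

Lemma pat_old : forall l g x, old (pat_subst g l) -> In x (pat_vars l) -> old (g x).
Proof.
  fix IH 1. intros [y | c ls] g x H Hin.
  - simpl in Hin. destruct Hin as [<-|[]]. exact H.
  - simpl in *. revert Hin H. induction ls as [|l1 ls IHls]; simpl; intros Hin H.
    + destruct Hin.
    + apply in_app_iff in Hin. destruct Hin as [Hin|Hin].
      * apply (IH l1 g x); auto. intros f Hf. apply H. econstructor. left; reflexivity. exact Hf.
      * apply IHls; auto. intros f Hf. apply H. inversion Hf; subst. econstructor. right; eassumption. eassumption.
Qed.

Hypothesis HpD : forall cl, In cl p -> In (chead cl) D /\ forall f, sym_in f (crhs cl) -> In f D.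
Hypothesis HqD : forall cl, In cl q -> ~ In (chead cl) D.
Hypothesis Hpvars : forall cl, In cl p -> forall x, var_in x (crhs cl) -> In x (lhs_vars cl).

Lemma back_all :
  (forall g e w, eval (p ++ q) g e w ->
     (forall f, sym_in f e -> In f D) -> (forall x, var_in x e -> old (g x)) -> eval p g e w /\ old w) /\
  (forall f vs w, call (p ++ q) f vs w -> In f D -> Forall old vs -> call p f vs w /\ old w).
Proof.
  apply mut_ind.
  - intros g x Hs Hv. split; [constructor | apply Hv; constructor].
  - intros g f w Hc IH Hs Hv. destruct (IH (Hs f (SI_fun _))) as [A B]; auto. split; auto. constructor; auto.
  - intros g c es bs HF Hs Hv.
    assert (Forall2 (eval p g) es bs /\ Forall old bs).
    { assert (Hs' : forall e, In e es -> forall f, sym_in f e -> In f D) by (intros; eapply Hs; econstructor; eauto).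
      assert (Hv' : forall e, In e es -> forall x, var_in x e -> old (g x)) by (intros; eapply Hv; econstructor; eauto).
      clear Hs Hv. induction HF as [|e b es bs [H1 H2] H3 IH]; [split; constructor|].
      destruct (H2 (Hs' e (or_introl eq_refl)) (Hv' e (or_introl eq_refl))).
      destruct IH. intros; eapply Hs'; simpl; eauto. intros; eapply Hv'; simpl; eauto.
      split; constructor; auto. }
    destruct H as [A B]. split. constructor; auto.
    intros f Hf. inversion Hf; subst. rewrite Forall_forall in B. eapply B; eauto.
  - intros g a b v w Ha IHa Hb IHb Hs Hv.
    destruct IHa as [A1 A2]; [intros; apply Hs; constructor; auto | intros; apply Hv; constructor; auto|].
    destruct IHb as [B1 B2]; [intros; apply Hs; constructor 8; auto | intros; apply Hv; constructor 8; auto|].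
    split. constructor; auto. intros f Hf; inversion Hf; subst; auto.
  - intros g es e w Hin He IH Hs Hv.
    destruct IH as [A1 A2]; [intros; eapply Hs; econstructor; eauto | intros; eapply Hv; econstructor; eauto|].
    split; auto. econstructor; eauto.
  - intros g a b c w Ha IHa Hb IHb Hs Hv.
    destruct IHa as [A1 A2]; [intros; apply Hs; constructor; auto | intros; apply Hv; constructor; auto|].
    destruct IHb as [B1 B2]; [intros; apply Hs; constructor 4; auto | intros; apply Hv; constructor 4; auto|].
    split; auto. constructor; auto.
  - intros g a b c w Ha IHa Hb IHb Hs Hv.
    destruct IHa as [A1 A2]; [intros; apply Hs; constructor; auto | intros; apply Hv; constructor; auto|].
    destruct IHb as [B1 B2]; [intros; apply Hs; constructor 5; auto | intros; apply Hv; constructor 5; auto|].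
    split; auto. apply E_if_f; auto.
  - intros g a b f vs v w Ha IHa Hb IHb Hc IHc Hs Hv.
    destruct IHa as [A1 A2]; [intros; apply Hs; constructor; auto | intros; apply Hv; constructor; auto|].
    destruct IHb as [B1 B2]; [intros; apply Hs; constructor 10; auto | intros; apply Hv; constructor 10; auto|].
    destruct IHc as [C1 C2].
    + apply A2. constructor.
    + apply Forall_app. split. apply Forall_forall. intros u Hu fx Hfx. apply A2. econstructor; eauto.
      constructor; auto.
    + split; auto. econstructor; eauto.
  - intros f vs [cl [H1 [H2 H3]]] Hf Hvs. split.
    + constructor. exists cl. apply in_app_iff in H1. destruct H1 as [H1|H1]; auto.
      exfalso. apply (HqD _ H1). congruence.
    + intros fx Hfx. inversion Hfx; subst; auto. rewrite Forall_forall in Hvs. eapply Hvs; eauto.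
  - intros f vs i cl g w Hn [Hh Hm] Hearly He IH Hf Hvs.
    assert (Hi : i < length p).
    { destruct (Nat.lt_ge_cases i (length p)) as [Hl|Hl]; auto. exfalso.
      rewrite nth_error_app2 in Hn; auto. apply nth_error_In in Hn. apply (HqD _ Hn). congruence. }
    rewrite nth_error_app1 in Hn; auto.
    pose proof (nth_error_In _ _ Hn) as Hin.
    destruct IH as [A1 A2].
    + apply (HpD _ Hin).
    + intros x Hx. apply (Hpvars _ Hin) in Hx. unfold lhs_vars in Hx.
      apply in_flat_map in Hx. destruct Hx as [l [Hl Hx]].
      apply (@pat_old l g x); auto. subst vs. rewrite Forall_forall in Hvs. apply Hvs.
      apply in_map; auto.
    + split; auto. apply (C_clause (i:=i) (g:=g) (cl:=cl)); [exact Hn | split; auto | | exact A1].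
      intros j cl' Hj Hn'. apply (Hearly j cl'); auto. rewrite nth_error_app1; auto. lia.
Qed.
End Back.

Implicit Types (P : program) (g : venv) (e a b : expr) (w v : val) (f : fsym) (vs : list val).

Definition ar_ge (P : program) f k := exists cl, In cl P /\ chead cl = f /\ k <= length (cpats cl).

Lemma call_ar P f vs w : call P f vs w -> ar_ge P f (length vs).
Proof.
  intros H. inversion H; subst.
  - destruct H0 as [cl [A [B C]]]. exists cl; repeat split; auto. lia.
  - destruct H1 as [A B]. exists cl. repeat split; auto. eapply nth_error_In; eauto.
    subst vs. rewrite length_map. lia.
Qed.

Lemma partial_inv P f k vs w : program_wf P -> ar_ge P f k -> length vs < k -> call P f vs w -> w = VFun f vs.
Proof.
  intros [_ Hwf] [cl [A [B C]]] Hl H. inversion H; subst; auto.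
  exfalso. destruct H1 as [H1 H1']. pose proof (nth_error_In _ _ H0).
  assert (length (cpats cl0) = length (cpats cl)) by (apply Hwf; auto).
  subst vs. rewrite length_map in Hl. lia.
Qed.

Lemma partial_intro P f k vs : ar_ge P f k -> length vs < k -> call P f vs (VFun f vs).
Proof. intros [cl [A [B C]]] Hl. constructor. exists cl. repeat split; auto. lia. Qed.

Lemma inv_var P g x w : eval P g (EVar Sg x) w -> w = g x.
Proof. intros H; inversion H; auto. Qed.

Lemma inv_if P g a b c w : eval P g (EIf a b c) w ->
  (eval P g a (enc_bool Sg true) /\ eval P g b w) \/ (eval P g a (enc_bool Sg false) /\ eval P g c w).
Proof. intros H; inversion H; subst; auto. Qed.

Lemma inv_cons0 P g (c : con Sg) w : eval P g (ECons c []) w -> w = VCons c [].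
Proof. intros H; inversion H; subst. match goal with H : Forall2 _ _ _ |- _ => inversion H end; auto. Qed.

Lemma intro_cons0 P g (c : con Sg) : eval P g (ECons c []) (VCons c []).
Proof. constructor. constructor. Qed.

Lemma inv_app_var P g x e w : eval P g (EApp (EVar Sg x) e) w ->
  exists f vs v, g x = VFun f vs /\ eval P g e v /\ call P f (vs ++ [v]) w.
Proof. intros H; inversion H; subst. match goal with H1 : eval _ _ (EVar _ _) _ |- _ => inversion H1; subst end. eauto 10. Qed.

Lemma inv_fun0 P f k w : program_wf P -> ar_ge P f k -> 0 < k -> forall g, eval P g (EFun f) w -> w = VFun f [].
Proof. intros Hw Ha Hk g H; inversion H; subst. eapply partial_inv; eauto. Qed.

Lemma inv_app1 P f k g e1 w : program_wf P -> ar_ge P f k -> 1 <= k ->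
  eval P g (EApp (EFun f) e1) w -> exists v1, eval P g e1 v1 /\ call P f [v1] w.
Proof.
  intros Hw Ha Hk H. inversion H; subst.
  match goal with H3 : eval _ _ (EFun _) _ |- _ => apply (inv_fun0 Hw Ha) in H3; [inversion H3; subst|lia] end. eauto.
Qed.

Lemma inv_app2 P f k g e1 e2 w : program_wf P -> ar_ge P f k -> 2 <= k ->
  eval P g (EApp (EApp (EFun f) e1) e2) w -> exists v1 v2, eval P g e1 v1 /\ eval P g e2 v2 /\ call P f [v1; v2] w.
Proof.
  intros Hw Ha Hk H. inversion H; subst.
  match goal with H3 : eval _ _ (EApp (EFun _) _) _ |- _ => apply (inv_app1 Hw Ha) in H3; [|lia]; destruct H3 as [v1 [A B]] end.
  apply (partial_inv Hw Ha) in B; [|simpl; lia]. inversion B; subst. eauto.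
Qed.

Lemma inv_app3 P f k g e1 e2 e3 w : program_wf P -> ar_ge P f k -> 3 <= k ->
  eval P g (EApp (EApp (EApp (EFun f) e1) e2) e3) w ->
  exists v1 v2 v3, eval P g e1 v1 /\ eval P g e2 v2 /\ eval P g e3 v3 /\ call P f [v1; v2; v3] w.
Proof.
  intros Hw Ha Hk H. inversion H; subst.
  match goal with H3 : eval _ _ (EApp (EApp (EFun _) _) _) _ |- _ => apply (inv_app2 Hw Ha) in H3; [|lia]; destruct H3 as [v1 [v2 [A [B C]]]] end.
  apply (partial_inv Hw Ha) in C; [|simpl; lia]. inversion C; subst. eauto 10.
Qed.

Lemma intro_app1 P f k g e1 v1 w : ar_ge P f k -> 1 <= k ->
  eval P g e1 v1 -> call P f [v1] w -> eval P g (EApp (EFun f) e1) w.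
Proof.
  intros Ha Hk A B. apply E_app with (f := f) (vs := []) (v := v1); auto.
  constructor. eapply partial_intro; [exact Ha | simpl; lia].
Qed.

Lemma intro_app2 P f k g e1 e2 v1 v2 w : ar_ge P f k -> 2 <= k ->
  eval P g e1 v1 -> eval P g e2 v2 -> call P f [v1; v2] w -> eval P g (EApp (EApp (EFun f) e1) e2) w.
Proof.
  intros Ha Hk A B C. apply E_app with (f := f) (vs := [v1]) (v := v2); auto.
  eapply intro_app1; eauto; [lia|]. eapply partial_intro; [exact Ha | simpl; lia].
Qed.

Lemma intro_app3 P f k g e1 e2 e3 v1 v2 v3 w : ar_ge P f k -> 3 <= k ->
  eval P g e1 v1 -> eval P g e2 v2 -> eval P g e3 v3 -> call P f [v1; v2; v3] w ->
  eval P g (EApp (EApp (EApp (EFun f) e1) e2) e3) w.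
Proof.
  intros Ha Hk A B C D. apply E_app with (f := f) (vs := [v1; v2]) (v := v3); auto.
  eapply intro_app2; eauto; [lia|]. eapply partial_intro; [exact Ha | simpl; lia].
Qed.

Lemma intro_app_var P g x e f vs v w : g x = VFun f vs -> eval P g e v -> call P f (vs ++ [v]) w ->
  eval P g (EApp (EVar Sg x) e) w.
Proof. intros A B C. eapply E_app; eauto. rewrite <- A. constructor. Qed.


Lemma clause_inv P f cl vs w : program_wf P -> In cl P -> chead cl = f ->
  (forall cl', In cl' P -> chead cl' = f -> cl' = cl) -> length vs = length (cpats cl) ->
  call P f vs w -> exists g, vs = map (pat_subst g) (cpats cl) /\ eval P g (crhs cl) w.
Proof.
  intros Hw Hin Hh Hu Hl H. inversion H; subst.
  - destruct H0 as [cl' [A [B C]]]. rewrite (Hu cl' A B) in C. lia.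
  - destruct H1 as [A B]. pose proof (nth_error_In _ _ H0) as Hi.
    rewrite (Hu cl0 Hi A) in *. eauto.
Qed.

Lemma clause_intro P f cl i vs g w : nth_error P i = Some cl -> chead cl = f ->
  (forall j cl', j < i -> nth_error P j = Some cl' -> chead cl' <> f) ->
  vs = map (pat_subst g) (cpats cl) -> eval P g (crhs cl) w -> call P f vs w.
Proof.
  intros Hn Hh He Hv Hev. apply (C_clause (i:=i) (g:=g) (cl:=cl)); auto.
  - split; auto.
  - intros j cl' Hj Hn' [g' [A _]]. apply (He j cl'); auto.
Qed.

Lemma enc_bool_inj (x y : bool) : enc_bool Sg x = enc_bool Sg y -> x = y.
Proof.
  destruct x, y; simpl; intros H; auto; inversion H as [H1];
  exfalso; apply (ctrue_cfalse Sg); auto.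
Qed.

Lemma old_enc_list D cs : old D (enc_list Sg cs).
Proof.
  induction cs as [|x cs IH]; intros f Hf; simpl in Hf; inversion Hf; subst.
  - destruct H2.
  - destruct H2 as [<-|[<-|[]]].
    + inversion H3; subst. match goal with H : In _ [] |- _ => destruct H end.
    + apply IH; auto.
Qed.

Lemma is_data_enc_list cs : is_data (enc_list Sg cs).
Proof.
  induction cs as [|x cs IH]; simpl; constructor; auto.
  constructor; [constructor; constructor|constructor; auto].
Qed.

Lemma vt_enc_bool (x : bool) : val_type (enc_bool Sg x) (tbool Sg).
Proof.
  unfold tbool. destruct x; simpl.
  - destruct (ctrue_ty Sg) as [A B]. rewrite <- B. constructor. rewrite A. constructor.
  - destruct (cfalse_ty Sg) as [A B]. rewrite <- B. constructor. rewrite A. constructor.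
Qed.

Lemma vt_enc_list cs : val_type (enc_list Sg cs) (tlist Sg).
Proof.
  unfold tlist. destruct (cnil_ty Sg) as [A0 B0]. destruct (ccons_ty Sg) as [A1 B1].
  induction cs as [|x cs IH]; simpl.
  - rewrite <- B0. constructor. rewrite A0. constructor.
  - rewrite <- B1. constructor. rewrite A1. constructor; [apply vt_enc_bool|constructor; auto].
Qed.

Lemma ht_true G : has_type G (ECons (ctrue Sg) []) (tbool Sg).
Proof. unfold tbool. destruct (ctrue_ty Sg) as [A B]. rewrite <- B. constructor. rewrite A. constructor. Qed.
Lemma ht_false G : has_type G (ECons (cfalse Sg) []) (tbool Sg).
Proof. unfold tbool. destruct (cfalse_ty Sg) as [A B]. rewrite <- B. constructor. rewrite A. constructor. Qed.

End Gen.


Section Good.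
Variable Sg : signature.
Inductive good (xs : list nat) (fs : list (fsym Sg)) : expr Sg -> Prop :=
| G_var x : In x xs -> good xs fs (EVar Sg x)
| G_fun f : In f fs -> good xs fs (EFun f)
| G_cons c : good xs fs (ECons c [])
| G_if a b c : good xs fs a -> good xs fs b -> good xs fs c -> good xs fs (EIf a b c)
| G_app a b : good xs fs a -> good xs fs b -> good xs fs (EApp a b).

Lemma good_var xs fs e x : good xs fs e -> var_in x e -> In x xs.
Proof.
  intros G H. induction H; inversion G; subst; auto.
  - match goal with H : In _ [] |- _ => destruct H end.
Qed.

Lemma good_sym xs fs e f : good xs fs e -> sym_in f e -> In f fs.
Proof.
  intros G H. induction H; inversion G; subst; auto.
  - match goal with H : In _ [] |- _ => destruct H end.
Qed.

Lemma good_subs xs fs e t : good xs fs e -> subs e t -> good xs fs t.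
Proof.
  intros G; revert t. induction G; intros t Hs; inversion Hs; subst;
   repeat match goal with H0 : _ = _ \/ _ |- _ => let H1 := fresh in destruct H0 as [<-|H1] end; auto.
  all: try match goal with H : In _ [] |- _ => destruct H end.
Qed.

Lemma good_cf xs fs e : good xs fs e -> forall t c es, sube e t -> t = ECons c es -> is_data_expr t.
Proof.
  intros G t c es [<-|H] ->.
  - inversion G; subst. constructor; constructor.
  - apply good_subs with (t := ECons c es) in G; auto. inversion G; subst. constructor; constructor.
Qed.
End Good.

Fixpoint dec (l : list bool) := match l with [] => [] | true :: l => false :: l | false :: l => true :: dec l end.
Fixpoint tonat (l : list bool) := match l with [] => 0 | b :: l => (if b then 1 else 0) + 2 * tonat l end.
Definition az (l : list bool) k := forallb negb (firstn k l).

Lemma tonat_dec l : 0 < tonat l -> tonat (dec l) = tonat l - 1.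
Proof. induction l as [|[|] l IH]; simpl; intros; try lia. Qed.

Lemma length_dec l : length (dec l) = length l.
Proof. induction l as [|[|] l IH]; simpl; auto. Qed.

Lemma tonat_ones n : tonat (repeat true n) = 2 ^ n - 1.
Proof. induction n; simpl; auto. rewrite IHn. assert (1 <= 2 ^ n) by (pose proof (Nat.pow_nonzero 2 n); lia). lia. Qed.

Lemma az_S l k : az l (S k) = az l k && negb (nth k l false).
Proof.
  unfold az. revert k; induction l as [|b l IH]; intros k; simpl.
  - destruct k; auto.
  - destruct k; simpl. destruct b; auto. rewrite <- andb_assoc. f_equal. rewrite <- IH. reflexivity.
Qed.

Lemma dec_nth l k : k < length l -> nth k (dec l) false = if az l k then negb (nth k l false) else nth k l false.
Proof.
  unfold az. revert k; induction l as [|b l IH]; intros k Hk; simpl in *; [lia|].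
  destruct b, k; simpl; auto.
  apply IH. lia.
Qed.

Lemma az_full l : az l (length l) = true <-> tonat l = 0.
Proof.
  unfold az. rewrite firstn_all. induction l as [|[|] l IH]; simpl; split; intros; auto; try discriminate; try lia.
  apply IH in H. lia. apply IH. lia.
Qed.


Section Main.
Variable Sg : signature.
Variable P : nat -> nat.
Hypothesis HP : forall n, 0 < P n.
Variable K : nat.
Variables (alpha : ty (sort Sg)) (D : list (fsym Sg)) (sd pr zr : fsym Sg)
  (A : nat -> val Sg -> Prop) (I : nat -> val Sg -> nat) (p : program Sg).
Hypothesis Hsd_in : In sd D.
Hypothesis Hpr_in : In pr D.
Hypothesis Hzr_in : In zr D.
Hypothesis Hsd_ty : fty sd = TArr (tlist Sg) alpha.
Hypothesis Hpr_ty : fty pr = TArr (tlist Sg) (TArr alpha alpha).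
Hypothesis Hzr_ty : fty zr = TArr (tlist Sg) (TArr alpha (tbool Sg)).
Hypothesis Hcf : cons_free p.
Hypothesis HpD : forall cl, In cl p -> In (chead cl) D /\ forall f, sym_in f (crhs cl) -> In f D.
Hypothesis HA : forall n v, A n v -> is_value p v /\ val_type v alpha /\ forall f, vsym_in f v -> In f D.
Hypothesis Hmain : forall n cs, length cs = n ->
     (exists v, call p sd [enc_list Sg cs] v /\
        (forall v', call p sd [enc_list Sg cs] v' -> v' = v) /\
        A n v /\ I n v = P n - 1) /\
     (forall v, A n v -> 0 < I n v ->
        exists w, call p pr [enc_list Sg cs; v] w /\
          (forall w', call p pr [enc_list Sg cs; v] w' -> w' = w) /\
          A n w /\ I n w = I n v - 1) /\
     (forall v, A n v ->
        (call p zr [enc_list Sg cs; v] (enc_bool Sg true) <-> I n v = 0) /\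
        (call p zr [enc_list Sg cs; v] (enc_bool Sg false) <-> 0 < I n v)).
Hypothesis Hord : data_order p K.

Definition N := S (list_max (map (@fname Sg) D)).
Definition tl := tlist Sg.
Definition tb := tbool Sg.
Definition alpha' := TArr alpha tb.
Definition ones := FSym Sg N (TArr tl alpha').
Definition decf := FSym Sg (N + 1) (TArr tl (TArr alpha' alpha')).
Definition chk := FSym Sg (N + 2) (TArr tl (TArr alpha' (TArr alpha tb))).
Definition zero2 := FSym Sg (N + 3) (TArr tl (TArr alpha' tb)).

Definition V x := EVar Sg x.
Definition TRUE := ECons (ctrue Sg) [].
Definition FALSE := ECons (cfalse Sg) [].
Definition Z a b := EApp (EApp (EFun zr) a) b.
Definition PR a b := EApp (EApp (EFun pr) a) b.
Definition SD a := EApp (EFun sd) a.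
Definition CHK a b c := EApp (EApp (EApp (EFun chk) a) b) c.
Definition Fi := EApp (V 1) (V 2).
Definition NOT e := EIf e FALSE TRUE.

Definition cl_ones := Clause ones [PVar Sg 0; PVar Sg 2] TRUE.
Definition cl_decf := Clause decf [PVar Sg 0; PVar Sg 1; PVar Sg 2]
  (EIf (Z (V 0) (V 2)) (NOT Fi) (EIf (CHK (V 0) (V 1) (PR (V 0) (V 2))) (NOT Fi) Fi)).
Definition cl_chk := Clause chk [PVar Sg 0; PVar Sg 1; PVar Sg 2]
  (EIf Fi FALSE (EIf (Z (V 0) (V 2)) TRUE (CHK (V 0) (V 1) (PR (V 0) (V 2))))).
Definition cl_zero2 := Clause zero2 [PVar Sg 0; PVar Sg 1] (CHK (V 0) (V 1) (SD (V 0))).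
Definition q := [cl_ones; cl_decf; cl_chk; cl_zero2].
Definition P' := p ++ q.
Definition D' := D ++ [ones; decf; chk; zero2].

Lemma fresh j t : N <= j -> ~ In (FSym Sg j t) D.
Proof.
  intros Hj H. assert (Hm : In j (map (@fname Sg) D)) by (change j with (fname (FSym Sg j t)); apply in_map; auto).
  pose proof (list_max_le (map (@fname Sg) D) (list_max (map (@fname Sg) D))) as [H1 _].
  specialize (H1 (le_n _)). rewrite Forall_forall in H1. specialize (H1 _ Hm). unfold N in Hj. lia.
Qed.

Lemma q_notD cl : In cl q -> ~ In (chead cl) D.
Proof.
  intros H. simpl in H. destruct H as [<-|[<-|[<-|[<-|[]]]]]; apply fresh; lia.
Qed.

Lemma q_uniq cl1 cl2 : In cl1 q -> In cl2 q -> chead cl1 = chead cl2 -> cl1 = cl2.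
Proof.
  simpl. intros H1 H2 H.
  destruct H1 as [<-|[<-|[<-|[<-|[]]]]]; destruct H2 as [<-|[<-|[<-|[<-|[]]]]]; auto;
  simpl in H; injection H; intros; lia.
Qed.

Lemma P'_uniq cl cl' : In cl q -> In cl' P' -> chead cl' = chead cl -> cl' = cl.
Proof.
  intros Hq H Hh. unfold P' in H. apply in_app_iff in H. destruct H as [H|H].
  - exfalso. apply (q_notD Hq). rewrite <- Hh. apply (proj1 (HpD _ H)).
  - apply q_uniq; auto.
Qed.


Definition G0 : tenv Sg := fun x => match x with 0 => tl | 1 => alpha' | _ => alpha end.

Lemma ht_zr G : has_type G (EFun zr) (TArr tl (TArr alpha tb)).
Proof. unfold tl, tb. rewrite <- Hzr_ty. constructor. Qed.
Lemma ht_pr G : has_type G (EFun pr) (TArr tl (TArr alpha alpha)).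
Proof. unfold tl. rewrite <- Hpr_ty. constructor. Qed.
Lemma ht_sd G : has_type G (EFun sd) (TArr tl alpha).
Proof. unfold tl. rewrite <- Hsd_ty. constructor. Qed.

Ltac ty :=
 match goal with
 | |- has_type _ (EApp _ _) _ => eapply T_app; [ty|ty]
 | |- has_type _ (EIf _ _ _) _ => apply T_if; [ty|ty|ty]
 | |- has_type ?G (EVar _ ?x) _ => exact (T_var G x)
 | |- has_type _ (EFun zr) _ => apply ht_zr
 | |- has_type _ (EFun pr) _ => apply ht_pr
 | |- has_type _ (EFun sd) _ => apply ht_sd
 | |- has_type _ (EFun ?f) _ => exact (T_fun _ f)
 | |- has_type _ (ECons (ctrue _) []) _ => apply ht_true
 | |- has_type _ (ECons (cfalse _) []) _ => apply ht_false
 end.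

Ltac gd :=
 match goal with
 | |- good _ _ (EApp _ _) => apply G_app; gd
 | |- good _ _ (EIf _ _ _) => apply G_if; gd
 | |- good _ _ (EVar _ _) => apply G_var; simpl; tauto
 | |- good _ _ (EFun _) => apply G_fun; unfold D'; apply in_app_iff; first [left; assumption | right; simpl; tauto]
 | |- good _ _ (ECons _ []) => apply G_cons
 end.

Lemma q_good cl : In cl q -> good (lhs_vars cl) D' (crhs cl).
Proof.
  simpl. intros [<-|[<-|[<-|[<-|[]]]]]; unfold cl_ones, cl_decf, cl_chk, cl_zero2, NOT, Fi, CHK, Z, PR, SD, V, TRUE, FALSE; simpl; gd.
Qed.

Lemma q_typed cl : In cl q -> clause_typed G0 cl.
Proof.
  intros H. split; [|split].
  - simpl in H. destruct H as [<-|[<-|[<-|[<-|[]]]]]; simpl; repeat constructor; simpl; intuition discriminate.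
  - intros x Hx. exact (good_var (q_good H) Hx).
  - exists tb. simpl in H. destruct H as [<-|[<-|[<-|[<-|[]]]]];
    unfold cl_ones, cl_decf, cl_chk, cl_zero2, lhs_expr, NOT, Fi, CHK, Z, PR, SD, V, TRUE, FALSE; simpl; split; ty.
Qed.


Lemma p_wf : program_wf p.
Proof. exact (proj1 Hcf). Qed.

Lemma P'_wf : program_wf P'.
Proof.
  split.
  - intros cl H. unfold P' in H. apply in_app_iff in H. destruct H as [H|H].
    + apply (proj1 p_wf); auto.
    + exists G0. apply q_typed; auto.
  - intros cl1 cl2 H1 H2 Hh. unfold P' in *. apply in_app_iff in H1, H2.
    destruct H1 as [H1|H1], H2 as [H2|H2].
    + apply (proj2 p_wf); auto.
    + exfalso. apply (q_notD H2). rewrite <- Hh. apply (proj1 (HpD _ H1)).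
    + exfalso. apply (q_notD H1). rewrite Hh. apply (proj1 (HpD _ H2)).
    + rewrite (q_uniq H1 H2 Hh). auto.
Qed.

Lemma P'_cf : cons_free P'.
Proof.
  split; [exact P'_wf|]. intros cl H. unfold P' in H. apply in_app_iff in H. destruct H as [H|H].
  - apply (proj2 Hcf); auto.
  - intros t c es Hs Ht. left. eapply good_cf; eauto. apply q_good; auto.
Qed.

Lemma ord_alpha : ord alpha <= K.
Proof.
  destruct (@Hmain 0 [] eq_refl) as [[v0 [Hs [_ [HAv _]]]] [_ Hz]].
  destruct (Hz v0 HAv) as [[_ Ht] [_ Hf]].
  assert (Hc : exists b, call p zr [enc_list Sg []; v0] (enc_bool Sg b)).
  { destruct (Nat.eq_dec (I 0 v0) 0); [exists true; apply Ht; auto | exists false; apply Hf; lia]. }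
  destruct Hc as [b Hc]. unfold enc_bool in Hc. inversion Hc; subst.
  - destruct H0 as [Hh Hm]. pose proof (nth_error_In _ _ H) as Hin.
    destruct (Hord _ Hin) as [G [[_ [_ [t [Hl _]]]] Hk]].
    destruct (cpats cl) as [|l1 [|l2 [|l3 ls]]] eqn:E; simpl in Hm; try discriminate.
    unfold lhs_expr in Hl. rewrite E, Hh in Hl. simpl in Hl.
    inversion Hl as [| | | | | |? ? s0 ? H4 H6]; subst.
    inversion H4 as [| | | | | |? ? s1 ? H7 H8]; subst.
    inversion H7 as [|f0 Hf0| | | | |]; subst.
    rewrite Hzr_ty in H0. inversion H0; subst.
    destruct l2 as [x|c ls].
    + simpl in H6. inversion H6; subst. apply Hk. unfold lhs_vars. rewrite E. simpl. apply in_app_iff. right. simpl; auto.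
    + simpl in H6. inversion H6; subst. simpl. lia.
Qed.

Lemma P'_order : data_order P' (K + 1).
Proof.
  intros cl H. unfold P' in H. apply in_app_iff in H. destruct H as [H|H].
  - destruct (Hord _ H) as [G [A1 A2]]. exists G. split; auto. intros x Hx. specialize (A2 x Hx). lia.
  - exists G0. split; [apply q_typed; auto|]. pose proof ord_alpha.
    intros x Hx. destruct x as [|[|x]]; simpl; unfold tl, tlist, alpha', tb, tbool; simpl; lia.
Qed.


Lemma in_P'_p cl : In cl p -> In cl P'.
Proof. intros; unfold P'; apply in_app_iff; auto. Qed.
Lemma in_P'_q cl : In cl q -> In cl P'.
Proof. intros; unfold P'; apply in_app_iff; auto. Qed.

Lemma ar_lift f k : ar_ge p f k -> ar_ge P' f k.
Proof. intros [cl [A1 [A2 A3]]]. exists cl. split; auto. apply in_P'_p; auto. Qed.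

Lemma Hpvars : forall cl, In cl p -> forall x, var_in x (crhs cl) -> In x (lhs_vars cl).
Proof. intros cl H. destruct (proj1 p_wf cl H) as [G [_ [A1 _]]]. exact A1. Qed.

Lemma back_call f vs w : call P' f vs w -> In f D -> Forall (old D) vs -> call p f vs w.
Proof. intros. apply (proj2 (back_all p q D HpD q_notD Hpvars) f vs w); auto. Qed.

Lemma mono_call f vs w : call p f vs w -> call P' f vs w.
Proof. apply (proj2 (mono_all p q)). Qed.

Lemma old_args n cs i : A n i -> Forall (old D) [enc_list Sg cs; i].
Proof. intros H. constructor; [apply old_enc_list|constructor; [|constructor]]. intros f Hf. apply (HA H); auto. Qed.

Lemma old_args1 cs : Forall (old D) [enc_list Sg cs].
Proof. constructor; [intros f Hf; apply (old_enc_list D cs Hf)|constructor]. Qed.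

Lemma zr_intro n cs i : length cs = n -> A n i -> call P' zr [enc_list Sg cs; i] (enc_bool Sg (I n i =? 0)).
Proof.
  intros Hl Hi. destruct (Hmain cs Hl) as [_ [_ Hz]]. destruct (Hz i Hi) as [[_ Ht] [_ Hf]].
  apply mono_call. destruct (I n i =? 0) eqn:E.
  - apply Ht. apply Nat.eqb_eq; auto.
  - apply Hf. apply Nat.eqb_neq in E. lia.
Qed.

Lemma zr_inv n cs i b : length cs = n -> A n i -> call P' zr [enc_list Sg cs; i] (enc_bool Sg b) -> b = (I n i =? 0).
Proof.
  intros Hl Hi H. apply back_call in H; auto; [|apply old_args with n; auto].
  destruct (Hmain cs Hl) as [_ [_ Hz]]. destruct (Hz i Hi) as [[Ht _] [Hf _]].
  destruct b.
  - symmetry. apply Nat.eqb_eq; auto.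
  - symmetry. apply Nat.eqb_neq. specialize (Hf H). lia.
Qed.

Lemma ar_zr : ar_ge P' zr 2.
Proof.
  destruct (@Hmain 0 [] eq_refl) as [[v0 [_ [_ [HAv _]]]] _].
  pose proof (@zr_intro 0 [] v0 eq_refl HAv) as H. apply call_ar in H. exact H.
Qed.

Lemma pr_fact n cs i : length cs = n -> A n i -> 0 < I n i ->
  exists w, call P' pr [enc_list Sg cs; i] w /\ (forall w', call P' pr [enc_list Sg cs; i] w' -> w' = w) /\
    A n w /\ I n w = I n i - 1 /\ ar_ge P' pr 2.
Proof.
  intros Hl Hi Hp. destruct (Hmain cs Hl) as [_ [Hpr _]]. destruct (Hpr i Hi Hp) as [w [H1 [H2 [H3 H4]]]].
  exists w. repeat split; auto.
  - apply mono_call; auto.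
  - intros w' H. apply H2. apply back_call; auto. apply old_args with n; auto.
  - apply mono_call in H1. apply call_ar in H1. exact H1.
Qed.

Lemma sd_fact n cs : length cs = n ->
  exists s, call P' sd [enc_list Sg cs] s /\ (forall s', call P' sd [enc_list Sg cs] s' -> s' = s) /\
    A n s /\ I n s = P n - 1 /\ ar_ge P' sd 1.
Proof.
  intros Hl. destruct (Hmain cs Hl) as [[s [H1 [H2 [H3 H4]]]] _].
  exists s. repeat split; auto.
  - apply mono_call; auto.
  - intros w' H. apply H2. apply back_call; auto. apply old_args1.
  - apply mono_call in H1. apply call_ar in H1. exact H1.
Qed.


Fixpoint bits (n : nat) (v : val Sg) : list bool :=
  match v with
  | VFun _ [_; F0] => dec (bits n F0)
  | _ => repeat true (P n)
  end.

Inductive repF (n : nat) : val Sg -> Prop :=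
| R_ones cs : length cs = n -> repF n (VFun ones [enc_list Sg cs])
| R_dec cs F : length cs = n -> repF n F -> 0 < tonat (bits n F) -> repF n (VFun decf [enc_list Sg cs; F]).

Lemma bits_length n F : repF n F -> length (bits n F) = P n.
Proof. induction 1; simpl; [apply repeat_length | rewrite length_dec; auto]. Qed.

Definition callF (F : val Sg) i w := exists f vs, F = VFun f vs /\ call P' f (vs ++ [i]) w.

Definition goodF n F := forall i, A n i -> I n i < P n ->
  forall w, callF F i w <-> w = enc_bool Sg (nth (I n i) (bits n F) false).

Lemma ar_q cl : In cl q -> ar_ge P' (chead cl) (length (cpats cl)).
Proof. intros H. exists cl. split; auto. apply in_P'_q; auto. Qed.

Lemma ar_chk : ar_ge P' chk 3.
Proof. apply (ar_q (cl := cl_chk)). simpl; tauto. Qed.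
Lemma ar_ones : ar_ge P' ones 2.
Proof. apply (ar_q (cl := cl_ones)). simpl; tauto. Qed.
Lemma ar_decf : ar_ge P' decf 3.
Proof. apply (ar_q (cl := cl_decf)). simpl; tauto. Qed.
Lemma ar_zero2 : ar_ge P' zero2 2.
Proof. apply (ar_q (cl := cl_zero2)). simpl; tauto. Qed.

Lemma call_new k cl vs w : nth_error q k = Some cl ->
  (forall j cl', j < k -> nth_error q j = Some cl' -> chead cl' <> chead cl) ->
  length vs = length (cpats cl) ->
  (call P' (chead cl) vs w <-> exists g, vs = map (pat_subst g) (cpats cl) /\ eval P' g (crhs cl) w).
Proof.
  intros Hn He Hl. assert (Hq : In cl q) by (eapply nth_error_In; eauto). split.
  - intros H. eapply clause_inv; eauto.
    + exact P'_wf.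
    + apply in_P'_q; auto.
    + intros cl' H1 H2. apply P'_uniq; auto.
  - intros [g [A1 A2]]. apply clause_intro with (i := length p + k) (cl := cl) (g := g); auto.
    + unfold P'. rewrite nth_error_app2; [|lia]. replace (length p + k - length p) with k by lia. auto.
    + intros j cl' Hj Hn'. unfold P' in Hn'. destruct (Nat.lt_ge_cases j (length p)) as [Hj'|Hj'].
      * rewrite nth_error_app1 in Hn'; auto. apply nth_error_In in Hn'. intros Hh.
        apply (q_notD Hq). rewrite <- Hh. apply (proj1 (HpD _ Hn')).
      * rewrite nth_error_app2 in Hn'; auto. apply (He (j - length p)); auto. lia.
Qed.

Lemma heads_neq a b t1 t2 : a <> b -> FSym Sg a t1 <> FSym Sg b t2.
Proof. intros H E. injection E. intros. auto. Qed.

Lemma call_chk vs w : length vs = 3 ->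
  (call P' chk vs w <-> exists g, vs = [g 0; g 1; g 2] /\ eval P' g (crhs cl_chk) w).
Proof.
  intros Hl. apply (call_new (k := 2) (cl := cl_chk)); auto.
  intros [|[|j]] cl' Hj Hn; simpl in Hn; try lia; inversion Hn; subst; simpl; apply heads_neq; lia.
Qed.

Lemma call_decf vs w : length vs = 3 ->
  (call P' decf vs w <-> exists g, vs = [g 0; g 1; g 2] /\ eval P' g (crhs cl_decf) w).
Proof.
  intros Hl. apply (call_new (k := 1) (cl := cl_decf)); auto.
  intros [|j] cl' Hj Hn; simpl in Hn; try lia; inversion Hn; subst; simpl; apply heads_neq; lia.
Qed.

Lemma call_ones vs w : length vs = 2 ->
  (call P' ones vs w <-> exists g, vs = [g 0; g 2] /\ eval P' g (crhs cl_ones) w).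
Proof.
  intros Hl. apply (call_new (k := 0) (cl := cl_ones)); auto. intros j cl' Hj; lia.
Qed.

Lemma call_zero2 vs w : length vs = 2 ->
  (call P' zero2 vs w <-> exists g, vs = [g 0; g 1] /\ eval P' g (crhs cl_zero2) w).
Proof.
  intros Hl. apply (call_new (k := 3) (cl := cl_zero2)); auto.
  intros [|[|[|j]]] cl' Hj Hn; simpl in Hn; try lia; inversion Hn; subst; simpl; apply heads_neq; lia.
Qed.


Lemma ev_var g x w : eval P' g (EVar Sg x) w <-> w = g x.
Proof. split; [apply inv_var | intros ->; constructor]. Qed.

Lemma ev_if g a b c w : eval P' g (EIf a b c) w <->
  (eval P' g a (enc_bool Sg true) /\ eval P' g b w) \/ (eval P' g a (enc_bool Sg false) /\ eval P' g c w).
Proof. split; [apply inv_if | intros [[A1 A2]|[A1 A2]]; [apply E_if_t|apply E_if_f]; auto]. Qed.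

Lemma ev_TRUE g w : eval P' g TRUE w <-> w = enc_bool Sg true.
Proof. split; [apply inv_cons0 | intros ->; apply intro_cons0]. Qed.
Lemma ev_FALSE g w : eval P' g FALSE w <-> w = enc_bool Sg false.
Proof. split; [apply inv_cons0 | intros ->; apply intro_cons0]. Qed.

Lemma ev_NOT g e w : eval P' g (NOT e) w <-> exists x, eval P' g e (enc_bool Sg x) /\ w = enc_bool Sg (negb x).
Proof.
  unfold NOT. rewrite ev_if, ev_TRUE, ev_FALSE. split.
  - intros [[A1 A2]|[A1 A2]]; [exists true|exists false]; auto.
  - intros [[|] [A1 A2]]; auto.
Qed.

Lemma ev_Fi n F i g w : goodF n F -> A n i -> I n i < P n -> g 1 = F -> g 2 = i ->
  (eval P' g Fi w <-> w = enc_bool Sg (nth (I n i) (bits n F) false)).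
Proof.
  intros HF Hi Hk H1 H2. rewrite <- (HF i Hi Hk w). unfold callF. split.
  - intros H. apply inv_app_var in H. destruct H as [f [vs [v [E1 [E2 E3]]]]].
    apply inv_var in E2. subst. exists f, vs. split; auto.
  - intros [f [vs [E1 E2]]]. eapply intro_app_var; [rewrite H1; exact E1 | | exact E2].
    rewrite <- H2; constructor.
Qed.

Lemma ev_Z n cs i g b : length cs = n -> A n i -> g 0 = enc_list Sg cs -> g 2 = i ->
  (eval P' g (Z (V 0) (V 2)) (enc_bool Sg b) <-> b = (I n i =? 0)).
Proof.
  intros Hl Hi H0 H2. split.
  - intros H. apply (inv_app2 P'_wf ar_zr) in H; [|lia]. destruct H as [v1 [v2 [E1 [E2 E3]]]].
    apply inv_var in E1. apply inv_var in E2. subst. rewrite H0 in E3. eapply zr_inv; eauto.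
  - intros ->. eapply intro_app2; [exact ar_zr | lia | | | apply (zr_intro cs Hl Hi)].
    + rewrite <- H0; constructor.
    + rewrite <- H2; constructor.
Qed.

Lemma ev_PR n cs i g : length cs = n -> A n i -> 0 < I n i -> g 0 = enc_list Sg cs -> g 2 = i ->
  exists w0, A n w0 /\ I n w0 = I n i - 1 /\ forall w, eval P' g (PR (V 0) (V 2)) w <-> w = w0.
Proof.
  intros Hl Hi Hp H0 H2. destruct (pr_fact cs Hl Hi Hp) as [w0 [C1 [C2 [C3 [C4 Ar]]]]].
  exists w0. repeat split; auto.
  - intros H. apply (inv_app2 P'_wf Ar) in H; [|lia]. destruct H as [v1 [v2 [E1 [E2 E3]]]].
    apply inv_var in E1. apply inv_var in E2. subst. rewrite H0 in E3. apply C2; auto.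
  - intros ->. eapply intro_app2; [exact Ar | lia | | | exact C1].
    + rewrite <- H0; constructor.
    + rewrite <- H2; constructor.
Qed.

Lemma ev_CHK g e w : eval P' g (CHK (V 0) (V 1) e) w <-> exists v, eval P' g e v /\ call P' chk [g 0; g 1; v] w.
Proof.
  split.
  - intros H. apply (inv_app3 P'_wf ar_chk) in H; [|lia]. destruct H as [v1 [v2 [v3 [E1 [E2 [E3 E4]]]]]].
    apply inv_var in E1. apply inv_var in E2. subst. eauto.
  - intros [v [A1 A2]]. eapply intro_app3; [exact ar_chk | lia | constructor | constructor | exact A1 | exact A2].
Qed.

Lemma ev_SD n cs g : length cs = n -> g 0 = enc_list Sg cs ->
  exists s, A n s /\ I n s = P n - 1 /\ forall w, eval P' g (SD (V 0)) w <-> w = s.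
Proof.
  intros Hl H0. destruct (sd_fact cs Hl) as [s [C1 [C2 [C3 [C4 Ar]]]]].
  exists s. repeat split; auto.
  - intros H. apply (inv_app1 P'_wf Ar) in H; [|lia]. destruct H as [v1 [E1 E2]].
    apply inv_var in E1. subst. rewrite H0 in E2. apply C2; auto.
  - intros ->. eapply intro_app1; [exact Ar | lia | | exact C1].
    rewrite <- H0; constructor.
Qed.



Lemma if_bool g a b c w x : (forall y, eval P' g a (enc_bool Sg y) <-> y = x) ->
  (eval P' g (EIf a b c) w <-> if x then eval P' g b w else eval P' g c w).
Proof.
  intros H. rewrite ev_if. rewrite (H true), (H false). destruct x; split; intros; try tauto.
  - destruct H0 as [[_ H0]|[E _]]; auto; discriminate.
  - destruct H0 as [[E _]|[_ H0]]; auto; discriminate.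
Qed.

Lemma Fi_bool n F i g : goodF n F -> A n i -> I n i < P n -> g 1 = F -> g 2 = i ->
  forall y, eval P' g Fi (enc_bool Sg y) <-> y = nth (I n i) (bits n F) false.
Proof.
  intros HF Hi Hk H1 H2 y. rewrite (ev_Fi g (enc_bool Sg y) HF Hi Hk H1 H2). split.
  - apply enc_bool_inj.
  - intros ->; auto.
Qed.

Definition g3 (c F i : val Sg) : venv Sg := fun x => match x with 0 => c | 1 => F | _ => i end.

Lemma chk_sem n F cs : goodF n F -> length cs = n -> forall k i, A n i -> I n i = k -> k < P n ->
  forall w, call P' chk [enc_list Sg cs; F; i] w <-> w = enc_bool Sg (az (bits n F) (S k)).
Proof.
  intros HF Hl k. induction k as [|k IH]; intros i Hi Hk Hlt w.
  all: assert (Hbody : forall g, g 0 = enc_list Sg cs -> g 1 = F -> g 2 = i ->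
          (eval P' g (crhs cl_chk) w <-> w = enc_bool Sg (az (bits n F) (S (I n i))))).
  all: try (intros g H0 H1 H2; simpl crhs;
    rewrite (if_bool _ _ w (Fi_bool g HF Hi (ltac:(lia)) H1 H2));
    rewrite az_S; destruct (nth (I n i) (bits n F) false); simpl; rewrite ?andb_false_r, ?andb_true_r;
    [rewrite ev_FALSE; tauto|];
    rewrite (if_bool _ _ w (fun y => ev_Z cs g y Hl Hi H0 H2))).
  - rewrite Hk. simpl. rewrite ev_TRUE. unfold az; simpl. tauto.
  - rewrite call_chk; auto. rewrite Hk in Hbody. split.
    + intros [g [E1 E2]]. injection E1; intros. apply (Hbody g); congruence.
    + intros Hw. exists (g3 (enc_list Sg cs) F i). split; auto. apply Hbody; auto.
  - rewrite Hk. simpl. rewrite ev_CHK.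
    destruct (ev_PR cs g Hl Hi (ltac:(lia)) H0 H2) as [w0 [B1 [B2 B3]]].
    split.
    + intros [v [E1 E2]]. apply B3 in E1. subst v. rewrite H0, H1 in E2.
      apply (IH w0 B1 (ltac:(lia)) (ltac:(lia)) w) in E2. rewrite E2. reflexivity.
    + intros ->. exists w0. split; [apply B3; auto|]. rewrite H0, H1.
      apply (IH w0 B1 (ltac:(lia)) (ltac:(lia))). reflexivity.
  - rewrite call_chk; auto. rewrite Hk in Hbody. split.
    + intros [g [E1 E2]]. injection E1; intros. apply (Hbody g); congruence.
    + intros Hw. exists (g3 (enc_list Sg cs) F i). split; auto. apply Hbody; auto.
Qed.



Lemma nth_repeat_true k m : k < m -> nth k (repeat true m) false = true.
Proof. revert k; induction m; intros [|k] H; simpl; auto; try lia. apply IHm. lia. Qed.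

Lemma NOT_Fi n F i g w : goodF n F -> A n i -> I n i < P n -> g 1 = F -> g 2 = i ->
  (eval P' g (NOT Fi) w <-> w = enc_bool Sg (negb (nth (I n i) (bits n F) false))).
Proof.
  intros HF Hi Hk H1 H2. rewrite ev_NOT. split.
  - intros [x [E1 E2]]. apply (Fi_bool g HF Hi Hk H1 H2) in E1. subst. auto.
  - intros ->. eexists; split; [apply (Fi_bool g HF Hi Hk H1 H2); reflexivity|reflexivity].
Qed.

Lemma callF_iff f vs i w : callF (VFun f vs) i w <-> call P' f (vs ++ [i]) w.
Proof.
  unfold callF. split.
  - intros [f' [vs' [E1 E2]]]. injection E1; intros; subst; auto.
  - intros H. eauto.
Qed.

Lemma rep_good n F : repF n F -> goodF n F.
Proof.
  induction 1 as [cs Hl|cs F Hl HrF IH Hpos]; intros i Hi Hk w; rewrite callF_iff; simpl app.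
  - rewrite call_ones; auto. simpl bits. rewrite nth_repeat_true; auto. split.
    + intros [g [_ E]]. simpl in E. apply ev_TRUE in E. auto.
    + intros ->. exists (g3 (enc_list Sg cs) i i). split; auto. simpl. apply ev_TRUE; auto.
  - assert (HlF : length (bits n F) = P n) by (apply bits_length; auto).
    change (bits n (VFun decf [enc_list Sg cs; F])) with (dec (bits n F)).
    rewrite dec_nth by lia.
    assert (Hbody : forall g, g 0 = enc_list Sg cs -> g 1 = F -> g 2 = i ->
          (eval P' g (crhs cl_decf) w <-> w = enc_bool Sg (if az (bits n F) (I n i)
             then negb (nth (I n i) (bits n F) false) else nth (I n i) (bits n F) false))).
    { intros g H0 H1 H2. simpl crhs.
      rewrite (if_bool _ _ w (fun y => ev_Z cs g y Hl Hi H0 H2)).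
      destruct (Nat.eq_dec (I n i) 0) as [E|E].
      - replace (I n i =? 0) with true by (symmetry; apply Nat.eqb_eq; auto).
        rewrite (NOT_Fi g w IH Hi Hk H1 H2). rewrite E. unfold az; simpl. tauto.
      - replace (I n i =? 0) with false by (symmetry; apply Nat.eqb_neq; auto).
        destruct (I n i) as [|k] eqn:E' in E; [lia|].
        destruct (ev_PR cs g Hl Hi (ltac:(lia)) H0 H2) as [w0 [B1 [B2 B3]]].
        assert (Hc : forall y, eval P' g (CHK (V 0) (V 1) (PR (V 0) (V 2))) (enc_bool Sg y) <-> y = az (bits n F) (S k)).
        { intros y. rewrite ev_CHK. rewrite H0, H1. split.
          - intros [v [E1 E2]]. apply B3 in E1. subst v.
            apply (chk_sem cs IH Hl (k := k) B1 (ltac:(lia)) (ltac:(lia))) in E2. exact (enc_bool_inj E2).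
          - intros ->. exists w0. split; [apply B3; auto|].
            apply (chk_sem cs IH Hl (k := k) B1 (ltac:(lia)) (ltac:(lia))). reflexivity. }
        rewrite (if_bool _ _ w Hc). rewrite <- E'.
        destruct (az (bits n F) (I n i)).
        + apply (NOT_Fi g w IH Hi Hk H1 H2).
        + apply (ev_Fi g w IH Hi Hk H1 H2). }
    rewrite call_decf; auto. split.
    + intros [g [E1 E2]]. injection E1; intros. apply (Hbody g); congruence.
    + intros Hw. exists (g3 (enc_list Sg cs) F i). split; auto. apply Hbody; auto.
Qed.


Lemma zero2_sem n F cs : repF n F -> length cs = n ->
  forall w, call P' zero2 [enc_list Sg cs; F] w <-> w = enc_bool Sg (az (bits n F) (P n)).
Proof.
  intros HF Hl w. pose proof (rep_good HF) as HG.
  destruct (ev_SD cs (g3 (enc_list Sg cs) F F) Hl eq_refl) as [s [S1 [S2 _]]].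
  assert (Hbody : forall g, g 0 = enc_list Sg cs -> g 1 = F ->
     (eval P' g (crhs cl_zero2) w <-> w = enc_bool Sg (az (bits n F) (P n)))).
  { intros g H0 H1. simpl crhs. rewrite ev_CHK. rewrite H0, H1.
    destruct (ev_SD cs g Hl H0) as [s' [T1 [T2 T3]]].
    replace (P n) with (S (P n - 1)) by (pose proof (HP n); lia).
    split.
    - intros [v [E1 E2]]. apply T3 in E1. subst v.
      apply (chk_sem cs HG Hl (k := P n - 1) T1 (ltac:(lia)) (ltac:(pose proof (HP n); lia))) in E2. exact E2.
    - intros ->. exists s'. split; [apply T3; auto|].
      apply (chk_sem cs HG Hl (k := P n - 1) T1 (ltac:(lia)) (ltac:(pose proof (HP n); lia))). reflexivity. }
  rewrite call_zero2; auto. split.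
  - intros [g [E1 E2]]. injection E1; intros. apply (Hbody g); congruence.
  - intros Hw. exists (g3 (enc_list Sg cs) F F). split; auto. apply Hbody; auto.
Qed.

Lemma vsym_enc f cs : vsym_in f (enc_list Sg cs) -> False.
Proof. intros H. exact (old_enc_list [] cs H). Qed.

Lemma rep_props n F : repF n F ->
  is_value P' F /\ val_type F alpha' /\ forall f, vsym_in f F -> In f D'.
Proof.
  induction 1 as [cs Hl|cs F Hl HrF [IH1 [IH2 IH3]] Hpos].
  - split; [|split].
    + apply V_fun. constructor; [constructor; apply is_data_enc_list|constructor].
      exists cl_ones. split; [apply in_P'_q; simpl; tauto|split; simpl; auto].
    + apply VT_fun with (ts := [tl]); [reflexivity|]. constructor; [apply vt_enc_list|constructor].
    + intros f Hf. inversion Hf; subst.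
      * unfold D'. apply in_app_iff; right; simpl; tauto.
      * match goal with H : In _ [_] |- _ => destruct H as [<-|[]] end. exfalso; eapply vsym_enc; eauto.
  - split; [|split].
    + apply V_fun. constructor; [constructor; apply is_data_enc_list|constructor; auto].
      exists cl_decf. split; [apply in_P'_q; simpl; tauto|split; simpl; auto].
    + apply VT_fun with (ts := [tl; alpha']); [reflexivity|]. constructor; [apply vt_enc_list|constructor; auto].
    + intros f Hf. inversion Hf; subst.
      * unfold D'. apply in_app_iff; right; simpl; tauto.
      * match goal with H : In _ [_; _] |- _ => destruct H as [<-|[<-|[]]] end. exfalso; eapply vsym_enc; eauto. auto.
Qed.

Theorem main_constr : exists m' : cmodule Sg,
    is_counting_module (fun n => 2 ^ P n) m' /\ module_data_order m' (K + 1).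
Proof.
  exists (CModule alpha' D' ones decf zero2 repF (fun n v => tonat (bits n v)) P').
  split; [|exact P'_order].
  unfold is_counting_module; cbn -[P' D'].
  assert (InD' : forall f, In f [ones; decf; chk; zero2] -> In f D') by (intros; unfold D'; apply in_app_iff; auto).
  split; [apply InD'; simpl; tauto|].
  split; [apply InD'; simpl; tauto|].
  split; [apply InD'; simpl; tauto|].
  split; [reflexivity|]. split; [reflexivity|]. split; [reflexivity|].
  split; [exact P'_cf|].
  split.
  { intros cl H. unfold P' in H. apply in_app_iff in H. destruct H as [H|H].
    - destruct (HpD _ H) as [A1 A2]. split; [unfold D'; apply in_app_iff; auto|].
      intros f Hf. unfold D'; apply in_app_iff; auto.
    - split.
      + apply InD'. simpl in H. destruct H as [<-|[<-|[<-|[<-|[]]]]]; simpl; tauto.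
      + intros f Hf. eapply good_sym; eauto. apply q_good; auto. }
  split; [intros n v Hv; exact (rep_props Hv)|].
  intros n cs Hl. split; [|split].
  - exists (VFun ones [enc_list Sg cs]). split; [|split; [|split]].
    + eapply partial_intro; [exact ar_ones|simpl; lia].
    + intros v' H. eapply partial_inv; [exact P'_wf|exact ar_ones| |exact H]. simpl; lia.
    + constructor; auto.
    + simpl. apply tonat_ones.
  - intros v Hv Hp. exists (VFun decf [enc_list Sg cs; v]). split; [|split; [|split]].
    + eapply partial_intro; [exact ar_decf|simpl; lia].
    + intros v' H. eapply partial_inv; [exact P'_wf|exact ar_decf| |exact H]. simpl; lia.
    + constructor; auto.
    + simpl. apply tonat_dec; auto.
  - intros v Hv. pose proof (bits_length Hv) as HL.
    rewrite !(zero2_sem cs Hv Hl). rewrite <- (az_full (bits n v)). rewrite HL. split; split; intros H.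
    + apply enc_bool_inj in H. auto.
    + rewrite H; auto.
    + apply enc_bool_inj in H. destruct (az (bits n v) (P n)) eqn:E; [discriminate|].
      destruct (Nat.eq_dec (tonat (bits n v)) 0) as [E'|E']; [|lia].
      rewrite <- HL in E. apply az_full in E'. congruence.
    + f_equal. destruct (az (bits n v) (P n)) eqn:E; auto.
      rewrite <- HL in E. apply az_full in E. lia.
Qed.

End Main.

Theorem lemma5 (Sg : signature) (P : nat -> nat) (K : nat) :
  (forall n, 0 < P n) ->
  (exists m : cmodule Sg, is_counting_module P m /\ module_data_order m K) ->
  exists m' : cmodule Sg,
    is_counting_module (fun n => 2 ^ P n) m' /\ module_data_order m' (K + 1).
Proof.
  intros HP [[alpha D sd pr zr A I p] [Hm Hord]].
  unfold is_counting_module in Hm; simpl in Hm. unfold module_data_order in Hord; simpl in Hord.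
  destruct Hm as (H1 & H2 & H3 & H4 & H5 & H6 & H7 & H8 & H9 & H10).
  exact (@main_constr Sg P HP K alpha D sd pr zr A I p H1 H2 H3 H4 H5 H6 H7 H8 H9 H10 Hord).
Qed.
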